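(* Define $G(k,T)=v(k,T)-\min_{a\in\{0,1,\dots,k\}}[v(k-a,T)+F(a)]$. Then for every $T\ge0$, the map $k\mapsto G(k,T)$ is non-decreasing.
   Context: Let $\lambda>0$ and let $N$ be a Poisson process with intensity $\lambda$, arrival times $0<\sigma_1<\sigma_2<\cdots$, and natural filtration $\mathcal F_t=\sigma(N_s:s\le t)$. Let $F:[0,\infty)\to[0,\infty)$ be strictly increasing and strictly convex with $F(0)=0$. For $k\in\{0,1,\dots\}$ let $\mathcal A_k$ be the set of $(\mathcal F_t)$-adapted, integer-valued, nonnegative, non-increasing processes $\xi$ with $\xi_0=k$ whose values change only at arrival times of $N$, and $v(k,T)=\inf_{\xi\in\mathcal A_k}\mathbb E[\sum_{i:\sigma_i\le T}F(\xi_{\sigma_i-}-\xi_{\sigma_i})+F(\xi_T)]$ (so $v(0,T)=0$). *)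

(* Defs.v *)
From HB Require Import structures.
From mathcomp Require Import all_boot all_order all_algebra.
From mathcomp Require Import all_classical all_reals all_analysis.
Set Implicit Arguments. Unset Strict Implicit. Unset Printing Implicit Defensive.
Import Order.TTheory GRing.Theory Num.Theory.
Import numFieldNormedType.Exports.
Local Open Scope classical_set_scope.
Local Open Scope ring_scope.

Section PoissonControl.
Context {d : measure_display} {Omega : measurableType d} {R : realType}.
Variable P : probability Omega R.

Definition interarrival (sigma : nat -> Omega -> R) (i : nat) : Omega -> R :=
  fun w => sigma i.+1 w - sigma i w.

Definition mutually_independent (X : nat -> Omega -> R) : Prop :=
  (forall i, measurable_fun setT (X i)) /\
  forall (s : seq nat) (B : nat -> set R), uniq s ->
    (forall i, measurable (B i)) ->
    P (\big[setI/setT]_(i <- s) (X i @^-1` B i)) =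
    (\prod_(i <- s) P (X i @^-1` B i))%E.

(* sigma : nat -> Omega -> R are the arrival times (sigma 0 = 0) of a
   Poisson process of intensity lam : 0 < sigma_1 < sigma_2 < ..., sigma_n -> oo,
   and the inter-arrival times are i.i.d. exponential(lam). *)
Definition poisson_arrivals (lam : R) (sigma : nat -> Omega -> R) : Prop :=
  [/\ (forall w, sigma 0%N w = 0),
      (forall i w, sigma i w < sigma i.+1 w),
      (forall w t, exists i, t < sigma i w),
      mutually_independent (interarrival sigma) &
      (forall i x, 0 <= x ->
         P [set w | x < interarrival sigma i w] = (expR (- (lam * x)))%:E)].

(* the counting process N_t = #{i >= 1 | sigma_i <= t} *)
Definition counting (sigma : nat -> Omega -> R) (t : R) (w : Omega) : nat :=
  xget 0%N [set n : nat | sigma n w <= t < sigma n.+1 w].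

Definition natF (sigma : nat -> Omega -> R) (t : R) : set (set Omega) :=
  <<s [set A | exists s (m : nat), 0 <= s <= t /\
                  A = [set w | counting sigma s w = m]] >>.

Definition admissible (sigma : nat -> Omega -> R) (k : nat)
    (xi : R -> Omega -> nat) : Prop :=
  [/\ (forall w, xi 0 w = k),
      (forall w s t, 0 <= s -> s <= t -> (xi t w <= xi s w)%N),
      (forall t (n : nat), 0 <= t -> natF sigma t [set w | xi t w = n]) &
      (forall w s t, 0 <= s -> s <= t ->
         counting sigma s w = counting sigma t w -> xi s w = xi t w)].

Definition left_lim (xi : R -> Omega -> nat) (t : R) (w : Omega) : R :=
  lim ((fun s => ((xi s w)%:R : R)) @ t^'-).

Definition cost (sigma : nat -> Omega -> R) (F : R -> R)
    (xi : R -> Omega -> nat) (T : R) (w : Omega) : \bar R :=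
  ((\sum_(i <oo | (0 < i)%N && (sigma i w <= T)%R)
      (F (left_lim xi (sigma i w) w - (xi (sigma i w) w)%:R))%:E)
   + (F (xi T w)%:R)%:E)%E.

Definition value (sigma : nat -> Omega -> R) (F : R -> R) (k : nat) (T : R)
  : \bar R :=
  ereal_inf [set (\int[P]_w cost sigma F xi T w)%E | xi in admissible sigma k].

Definition Gfun (sigma : nat -> Omega -> R) (F : R -> R) (k : nat) (T : R)
  : \bar R :=
  (value sigma F k T -
   \big[Order.min/+oo]_(a < k.+1) (value sigma F (k - a)%N T + (F a%:R)%:E))%E.

End PoissonControl.

(* Main.v *)
Require Import Defs.
Set Warnings "-all".
From HB Require Import structures.
From mathcomp Require Import all_boot all_order all_algebra.
From mathcomp Require Import all_classical all_reals all_analysis.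
From mathcomp Require Import measurable_realfun.
From mathcomp Require Import zify ring lra.
Import Order.TTheory GRing.Theory Num.Theory.
Import numFieldNormedType.Exports.
Local Open Scope classical_set_scope.
Local Open Scope ring_scope.
Local Notation counting := Defs.counting.

Section Salg.
Context {T : Type} (S : set (set T)).
Hypothesis hS : sigma_algebra setT S.

Lemma salgC A : S A -> S (~` A).
Proof. by case: hS => _ hC _ SA; rewrite -setTD; apply: hC. Qed.

Lemma salgU A B : S A -> S B -> S (A `|` B).
Proof.
case: hS => _ _ hU SA SB.
have -> : A `|` B = \bigcup_n (if n is 0%N then A else B).
  apply/seteqP; split => x.
    by case=> h; [exists 0%N | exists 1%N].
  by case=> -[|n] _ h; [left | right].
by apply: hU => -[|n].
Qed.

Lemma salgI A B : S A -> S B -> S (A `&` B).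
Proof.
move=> SA SB; rewrite -[A `&` B]setCK setCI; apply: salgC.
by apply: salgU; apply: salgC.
Qed.

Lemma salg_count (C : countType) (f : T -> C) (Q : C -> Prop) :
  (forall c, S (f @^-1` [set c])) -> S [set w | Q (f w)].
Proof.
case: hS => S0 _ hU hf.
have -> : [set w | Q (f w)] = \bigcup_n
   (match @unpickle C n with Some c => if `[< Q c >] then f @^-1` [set c] else set0
    | None => set0 end).
  apply/seteqP; split => w.
    move=> Qw; exists (pickle (f w)) => //.
    by rewrite pickleK; case: asboolP.
  case=> n _; case: (unpickle n) => [c|] //.
  by case: asboolP => // Qc /= ->.
apply: hU => n; case: (unpickle n) => [c|] //.
by case: asboolP.
Qed.
End Salg.
Section Basic.
Context {d : measure_display} {Omega : measurableType d} {R : realType}.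
Variable (sigma : nat -> Omega -> R).
Hypothesis hs0 : forall w, sigma 0%N w = 0.
Hypothesis hinc : forall i w, sigma i w < sigma i.+1 w.
Hypothesis hunb : forall w t, exists i, t < sigma i w.
Hypothesis hmi : forall i, measurable_fun setT (interarrival sigma i).

Lemma sigma_lt i j w : (i < j)%N -> sigma i w < sigma j w.
Proof.
elim: j => // j IH; rewrite ltnS leq_eqVlt => /orP[/eqP->|/IH h]; first exact: hinc.
exact: lt_trans h (hinc _ _).
Qed.

Lemma sigma_le i j w : (i <= j)%N -> sigma i w <= sigma j w.
Proof. by rewrite leq_eqVlt => /orP[/eqP->//|/(sigma_lt _ _ w)/ltW]. Qed.

Lemma sigma_ge0 i w : 0 <= sigma i w.
Proof. by rewrite -(hs0 w); apply: sigma_le. Qed.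

Lemma sigma_uniq i j w t : sigma i w <= t < sigma i.+1 w ->
  sigma j w <= t < sigma j.+1 w -> i = j.
Proof.
move=> /andP[a b] /andP[c e]; apply/eqP; rewrite eqn_leq; apply/andP; split.
  rewrite leqNgt; apply/negP => ji.
  by have := sigma_le _ _ w ji; rewrite leNgt (le_lt_trans a e).
rewrite leqNgt; apply/negP => ij.
by have := sigma_le _ _ w ij; rewrite leNgt (le_lt_trans c b).
Qed.

Lemma counting_eq i w t : sigma i w <= t < sigma i.+1 w -> counting sigma t w = i.
Proof.
move=> h; apply: xget_unique => // j hj; exact: sigma_uniq _ _ _ _ hj h.
Qed.

Lemma counting_ex w t : 0 <= t -> exists i, sigma i w <= t < sigma i.+1 w.
Proof.
move=> t0.
have ex : exists j, t < sigma j w by apply: hunb.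
pose j := ex_minn ex.
have : t < sigma j w by rewrite /j; case: ex_minnP.
have jmin : forall m, t < sigma m w -> (j <= m)%N by rewrite /j; case: ex_minnP.
case E: j => [|i] h.
  by rewrite hs0 in h; move: (lt_le_trans h t0); rewrite ltxx.
exists i; rewrite h andbT leNgt; apply/negP => /jmin; rewrite E ltnn //.
Qed.

Lemma sigma_meas i : measurable_fun setT (sigma i).
Proof.
elim: i => [|i IH].
  have -> : sigma 0%N = cst 0 by apply/funext => w; rewrite hs0.
  exact: measurable_cst.
have -> : sigma i.+1 = (sigma i \+ interarrival sigma i)%R.
  by apply/funext => w; rewrite /interarrival /= addrC subrK.
exact: measurable_funD.
Qed.

Lemma counting_fiber t m : 0 <= t ->
  [set w | counting sigma t w = m] = [set w | sigma m w <= t] `&` [set w | t < sigma m.+1 w].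
Proof.
move=> t0; apply/seteqP; split => w /=.
  case: (counting_ex w _ t0) => i hi; rewrite (counting_eq _ _ _ hi) => <-.
  by case/andP: hi.
by case=> a b; apply: counting_eq; rewrite a b.
Qed.

Lemma meas_le_set (f : Omega -> R) t : measurable_fun setT f ->
  measurable [set w | f w <= t].
Proof.
move=> mf; have := mf measurableT `]-oo, t]%classic (measurable_itv _).
by rewrite setTI; congr measurable; apply/seteqP; split => w /=; rewrite in_itv.
Qed.

Lemma meas_lt_set (f : Omega -> R) t : measurable_fun setT f ->
  measurable [set w | t < f w].
Proof.
move=> mf; have := mf measurableT `]t, +oo[%classic (measurable_itv _).
by rewrite setTI; congr measurable; apply/seteqP; split => w /=; rewrite in_itv /= andbT.
Qed.

Lemma natF_meas t A : 0 <= t -> natF sigma t A -> measurable A.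
Proof.
move=> t0; apply: smallest_sub; first exact: sigma_algebra_measurable.
move=> B [s [m [/andP[s0 _] ->]]]; rewrite counting_fiber //.
apply: measurableI; [exact: meas_le_set (sigma_meas _)|exact: meas_lt_set (sigma_meas _)].
Qed.

Definition Xv (xi : R -> Omega -> nat) i w := xi (sigma i w) w.

Section AdmXi.
Variables (k : nat) (xi : R -> Omega -> nat).
Hypothesis hxi : admissible sigma k xi.

Lemma adm_const i w t : sigma i w <= t < sigma i.+1 w -> xi t w = Xv xi i w.
Proof.
case: hxi => _ _ _ hj h; symmetry; apply: hj; first exact: sigma_ge0.
  by case/andP: h.
rewrite (counting_eq _ _ _ h) (counting_eq i w); first by [].
by rewrite lexx hinc.
Qed.

Lemma adm_Xle i w : (Xv xi i.+1 w <= Xv xi i w)%N.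
Proof. case: hxi => _ hm _ _; apply: hm; [exact: sigma_ge0| exact: ltW]. Qed.

Lemma adm_left_lim i w : left_lim xi (sigma i.+1 w) w = (Xv xi i w)%:R.
Proof.
rewrite /left_lim; apply: cvg_lim; first exact: Rhausdorff.
apply: cvg_near_cst; near=> s.
rewrite (@adm_const i w s) //; apply/andP; split.
  by near: s; apply: nbhs_left_ge.
by near: s; apply: nbhs_left_lt.
Unshelve. all: by end_near.
Qed.

Lemma adm_meas_t t m : 0 <= t -> measurable [set w | xi t w = m].
Proof. case: hxi => _ _ ha _ t0; apply: (natF_meas _ _ t0); exact: ha. Qed.

Lemma adm_X_fiber i m : measurable [set w | Xv xi i w = m].
Proof.
have -> : [set w | Xv xi i w = m] = \bigcup_(q : rat)
    (if (0 <= ratr q :> R) then [set w | sigma i w <= ratr q] `&`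
       [set w | ratr q < sigma i.+1 w] `&` [set w | xi (ratr q) w = m] else set0).
  apply/seteqP; split => w /=.
    move=> hw; have [q] := rat_in_itvoo (hinc i w).
    rewrite in_itv /= => /andP[a b]; exists q => //.
    have q0 : (0 <= ratr q :> R) by apply: le_trans (sigma_ge0 _ _) (ltW a).
    rewrite q0; split; [split|]; rewrite /= ?(ltW a) //.
    by rewrite (@adm_const i w) ?(ltW a) ?b.
  case=> q _; case: ifP => // q0 [[a b] c].
  by rewrite -(@adm_const i w (ratr q)) ?a ?b.
apply: bigcupT_measurable_rat => q; case: ifP => // q0.
apply: measurableI; first apply: measurableI.
- exact: meas_le_set (sigma_meas _).
- exact: meas_lt_set (sigma_meas _).
- exact: adm_meas_t.
Qed.

End AdmXi.
Lemma meas_count (C : countType) (f : Omega -> C) d' (U : measurableType d')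
  (g : C -> U) : (forall c, measurable (f @^-1` [set c])) ->
  measurable_fun setT (g \o f).
Proof.
move=> hf _ B mB; rewrite setTI.
exact: (@salg_count _ _ (sigma_algebra_measurable Omega) _ f (fun c => B (g c)) hf).
Qed.

Lemma meas_bool_le (f : Omega -> R) t (c : bool) : measurable_fun setT f ->
  measurable [set w | (f w <= t) = c].
Proof.
move=> mf; case: c.
  by have := meas_le_set _ t mf; congr measurable; apply/seteqP; split => w /= /eqP.
have := measurableC (meas_le_set _ t mf); congr measurable; apply/seteqP; split => w /=.
  by move/negP/negbTE.
by move=> ->.
Qed.

Variables (F : R -> R) (T : R).
Hypothesis Fpos : forall x, 0 <= x -> 0 <= F x.
Hypothesis T0 : 0 <= T.

Definition termf (xi : R -> Omega -> nat) i w : \bar R :=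
  if (0 < i)%N && (sigma i w <= T) then (F (Xv xi i.-1 w - Xv xi i w)%:R)%:E else 0%E.

Lemma cost_eq k xi w : admissible sigma k xi ->
  cost sigma F xi T w = (\sum_(i <oo) termf xi i w + (F (xi T w)%:R)%:E)%E.
Proof.
move=> hxi; rewrite /cost /termf -eseries_mkcond; congr (_ + _)%E.
apply: eq_eseriesr => -[|i] //= _.
by rewrite (adm_left_lim _ _ hxi) natrB //; exact: (adm_Xle _ _ hxi).
Qed.

Lemma termf_ge0 xi i w : (0 <= termf xi i w)%E.
Proof. by rewrite /termf; case: ifP => // _; rewrite lee_fin; apply: Fpos. Qed.

Lemma cost_ge0 k xi w : admissible sigma k xi -> (0 <= cost sigma F xi T w)%E.
Proof.
move=> hxi; rewrite (cost_eq _ _ _ hxi); apply: adde_ge0.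
  by apply: nneseries_ge0 => n _ _; apply: termf_ge0.
by rewrite lee_fin; apply: Fpos.
Qed.

Lemma cost_meas k xi : admissible sigma k xi ->
  measurable_fun setT (cost sigma F xi T : Omega -> \bar R).
Proof.
move=> hxi.
have -> : cost sigma F xi T = ((fun w => \sum_(i <oo) termf xi i w) \+
      (fun w => (F (xi T w)%:R)%:E))%E.
  by apply/funext => w; rewrite (cost_eq _ _ _ hxi).
apply: emeasurable_funD.
  apply: (@ge0_emeasurable_sum _ _ _ _ _ xpredT).
    by move=> n w _ _; apply: termf_ge0.
  move=> i _.
  pose g (c : nat * nat * bool) : \bar R :=
    if (0 < i)%N && c.2 then (F (c.1.1 - c.1.2)%:R)%:E else 0%E.
  have -> : termf xi i = g \o (fun w => (Xv xi i.-1 w, Xv xi i w, sigma i w <= T)).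
    by apply/funext => w.
  apply: meas_count => -[[a b] c].
  have -> : (fun w => (Xv xi i.-1 w, Xv xi i w, sigma i w <= T)) @^-1` [set (a, b, c)] =
    [set w | Xv xi i.-1 w = a] `&` [set w | Xv xi i w = b] `&` [set w | (sigma i w <= T) = c].
    apply/seteqP; split => w /=; first by case=> -> -> ->.
    by case=> -[-> ->] ->.
  apply: measurableI; first apply: measurableI.
  - exact: (adm_X_fiber _ _ hxi).
  - exact: (adm_X_fiber _ _ hxi).
  - exact: meas_bool_le (sigma_meas _).
have -> : (fun w => (F (xi T w)%:R)%:E) = (fun n : nat => (F n%:R)%:E) \o xi T by [].
apply: meas_count => c; exact: (adm_meas_t _ _ hxi).
Qed.
Hypothesis F0 : F 0 = 0.
Variable P : probability Omega R.

Lemma natF_setT t : natF sigma t setT.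
Proof. rewrite -setC0; apply: (@salgC _ (natF sigma t)); [exact: smallest_sigma_algebra|exact: sigma_algebra0]. Qed.

Lemma adm_cst k : admissible sigma k (fun _ _ => k).
Proof.
split => //.
move=> t n _; have [->|kn] := eqVneq k n.
  have -> : [set _ : Omega | n = n] = setT by apply/seteqP; split.
  exact: natF_setT.
have -> : [set _ : Omega | k = n] = set0.
  by apply/seteqP; split => // w /= /eqP; rewrite (negbTE kn).
exact: sigma_algebra0.
Qed.

Lemma cost_cst k w : cost sigma F (fun _ _ => k) T w = (F k%:R)%:E.
Proof.
rewrite (cost_eq _ _ _ (adm_cst k)) eseries0 ?add0e // => i _ _.
by rewrite /termf /Xv subnn F0; case: ifP.
Qed.

Lemma value_le k : (value P sigma F k T <= (F k%:R)%:E)%E.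
Proof.
apply: ereal_inf_lbound; exists (fun _ _ => k); first exact: adm_cst.
rewrite (_ : cost sigma F _ T = cst (F k%:R)%:E); last first.
  by apply/funext => w; rewrite cost_cst.
rewrite integral_cst //.
have h : forall x, (x * P setT)%E = x by move=> x; rewrite probability_setT mule1.
exact: h.
Qed.

Lemma int_ge0 k xi : admissible sigma k xi -> (0 <= \int[P]_w cost sigma F xi T w)%E.
Proof. by move=> hxi; apply: integral_ge0 => w _; exact: (cost_ge0 _ _ _ hxi). Qed.

Lemma value_ge0 k : (0 <= value P sigma F k T)%E.
Proof. by apply/ereal_infP => _ [xi hxi <-]; exact: (int_ge0 _ _ hxi). Qed.

Lemma value_fin k : value P sigma F k T = (fine (value P sigma F k T))%:E.
Proof.
rewrite fineK // ge0_fin_numE ?value_ge0 //.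
exact: le_lt_trans (value_le k) (ltry _).
Qed.
Hypothesis Fconv : forall x y t, 0 <= x -> 0 <= y -> x != y -> 0 < t < 1 ->
     F (t * x + (1 - t) * y) < t * F x + (1 - t) * F y.

Lemma Fconv2 a b p : 0 <= a -> a <= p -> p <= b ->
  F p + F (a + b - p) <= F a + F b.
Proof.
move=> a0 ap pb.
have [->|ne1] := eqVneq p a; first by rewrite addrAC subrr add0r.
have [->|ne2] := eqVneq p b; first by rewrite addrK addrC.
have lt1 : a < p by rewrite lt_neqAle eq_sym ne1 ap.
have lt2 : p < b by rewrite lt_neqAle ne2 pb.
have ba : 0 < b - a by lra.
set t := (b - p) / (b - a).
have t0 : 0 < t by rewrite divr_gt0 // subr_gt0.
have t1 : t < 1 by rewrite ltr_pdivrMr // mul1r; lra.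
have hp : p = t * a + (1 - t) * b.
  rewrite /t; field; lra.
have hq : a + b - p = t * b + (1 - t) * a.
  rewrite /t; field; lra.
have anb : a != b by rewrite lt_eqF //; lra.
have b0 : 0 <= b by lra.
have htt : 0 < t < 1 by rewrite t0 t1.
have h2 := Fconv a b t a0 b0 anb htt.
have h3 := Fconv b a t b0 a0 (ltac:(by rewrite eq_sym)) htt.
rewrite [in F p]hp hq; lra.
Qed.

Lemma Fconv_nat A B p q : (p + q = A + B)%N -> (minn A B <= p <= maxn A B)%N ->
  F p%:R + F q%:R <= F A%:R + F B%:R.
Proof.
have key : forall A B p q, (A <= B)%N -> (p + q = A + B)%N -> (A <= p <= B)%N ->
    F p%:R + F q%:R <= F A%:R + F B%:R.
  move=> A' B' p' q' hAB hs /andP[h1 h2].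
  have -> : q' = (A' + B' - p')%N by lia.
  rewrite natrB; last by lia.
  rewrite natrD; apply: Fconv2; by rewrite ?ler0n ?ler_nat.
move=> hs hm; case: (leqP A B) => hAB.
  by apply: key => //; lia.
rewrite [X in _ <= X]addrC; apply: key => //; lia.
Qed.

Section Coupling.
Variables (m : nat) (x y : R -> Omega -> nat).
Hypotheses (hx : admissible sigma m.+2 x) (hy : admissible sigma m y).

Definition xc t w := minn (x t w) (y t w).+1.
Definition yc t w := maxn (y t w) (x t w - 1).

Lemma natF_pair t (h : nat -> nat -> nat) j : 0 <= t ->
  natF sigma t [set w | h (x t w) (y t w) = j].
Proof.
move=> t0.
have hS := smallest_sigma_algebra setT
  [set A | exists s (m : nat), 0 <= s <= t /\ A = [set w | counting sigma s w = m]].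
apply: (@salg_count _ _ hS _ (fun w => (x t w, y t w)) (fun c => h c.1 c.2 = j)).
move=> [a b]; have -> : (fun w => (x t w, y t w)) @^-1` [set (a, b)] =
    [set w | x t w = a] `&` [set w | y t w = b].
  by apply/seteqP; split => w /=; [case=> -> ->|case=> -> ->].
apply: (@salgI _ _ hS).
  by case: hx => _ _ ha _; apply: ha.
by case: hy => _ _ ha _; apply: ha.
Qed.

Lemma adm_xc : admissible sigma m.+1 xc.
Proof.
case: hx => x0 xm xa xj; case: hy => y0 ym ya yj.
split.
- by move=> w; rewrite /xc x0 y0; lia.
- by move=> w s t s0 st; rewrite /xc; have := xm w s t s0 st; have := ym w s t s0 st; lia.
- by move=> t n t0; exact: (natF_pair t (fun a b => minn a b.+1) n t0).
- by move=> w s t s0 st hc; rewrite /xc (xj w s t) // (yj w s t).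
Qed.

Lemma adm_yc : admissible sigma m.+1 yc.
Proof.
case: hx => x0 xm xa xj; case: hy => y0 ym ya yj.
split.
- by move=> w; rewrite /yc x0 y0; lia.
- by move=> w s t s0 st; rewrite /yc; have := xm w s t s0 st; have := ym w s t s0 st; lia.
- by move=> t n t0; exact: (natF_pair t (fun a b => maxn b (a - 1)) n t0).
- by move=> w s t s0 st hc; rewrite /yc (xj w s t) // (yj w s t).
Qed.

Lemma cost_couple w : (cost sigma F xc T w + cost sigma F yc T w <=
  cost sigma F x T w + cost sigma F y T w)%E.
Proof.
rewrite (cost_eq _ _ _ adm_xc) (cost_eq _ _ _ adm_yc) (cost_eq _ _ _ hx) (cost_eq _ _ _ hy).
rewrite addeACA [X in (_ <= X)%E]addeACA.
apply: leeD.
  rewrite -!nneseriesD; try by move=> *; apply: termf_ge0.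
  apply: lee_nneseries; first by move=> *; rewrite adde_ge0 // termf_ge0.
  move=> i _; rewrite /termf; case: ifP => _; last by rewrite adde0.
  rewrite -!EFinD lee_fin /Xv /xc /yc.
  have a1 := adm_Xle _ _ hx i.-1 w; have b1 := adm_Xle _ _ hy i.-1 w.
  case: i a1 b1 => [|i] /=; first by rewrite !subnn.
  rewrite /Xv => a1 b1.
  apply: Fconv_nat; lia.
rewrite -!EFinD lee_fin /xc /yc; apply: Fconv_nat; lia.
Qed.

End Coupling.

Lemma int_couple m x y : admissible sigma m.+2 x -> admissible sigma m y ->
  (\int[P]_w cost sigma F (xc x y) T w + \int[P]_w cost sigma F (yc x y) T w <=
   \int[P]_w cost sigma F x T w + \int[P]_w cost sigma F y T w)%E.
Proof.
move=> hx hy.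
have hxc := adm_xc _ _ _ hx hy; have hyc := adm_yc _ _ _ hx hy.
rewrite -ge0_integralD //; last 4 first.
- by move=> w _; exact: (cost_ge0 _ _ _ hxc).
- exact: (cost_meas _ _ hxc).
- by move=> w _; exact: (cost_ge0 _ _ _ hyc).
- exact: (cost_meas _ _ hyc).
rewrite -ge0_integralD //; last 4 first.
- by move=> w _; exact: (cost_ge0 _ _ _ hx).
- exact: (cost_meas _ _ hx).
- by move=> w _; exact: (cost_ge0 _ _ _ hy).
- exact: (cost_meas _ _ hy).
apply: ge0_le_integral => //.
- by move=> w _; rewrite adde_ge0 // (cost_ge0 _ _ _ hxc, cost_ge0 _ _ _ hyc).
- exact: emeasurable_funD (cost_meas _ _ hxc) (cost_meas _ _ hyc).
- exact: emeasurable_funD (cost_meas _ _ hx) (cost_meas _ _ hy).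
- by move=> w _; exact: (cost_couple _ _ _ hx hy).
Qed.

Definition rv j := fine (value P sigma F j T).

Lemma convex_r m : rv m.+1 + rv m.+1 <= rv m.+2 + rv m.
Proof.
set a := rv m.+1; set b := rv m.+2; set c := rv m.
have H : forall x y, admissible sigma m.+2 x -> admissible sigma m y ->
    ((a + a)%:E <= \int[P]_w cost sigma F x T w + \int[P]_w cost sigma F y T w)%E.
  move=> x y hx hy; apply: le_trans (int_couple _ _ _ hx hy).
  rewrite EFinD /a -value_fin; apply: leeD; apply: ereal_inf_lbound.
    by exists (xc x y) => //; exact: adm_xc.
  by exists (yc x y) => //; exact: adm_yc.
have H2 : forall y, admissible sigma m y ->
    ((a + a - b)%:E <= \int[P]_w cost sigma F y T w)%E.
  move=> y hy; have := int_ge0 _ _ hy.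
  case E: (\int[P]_w cost sigma F y T w)%E => [s| |] // _; last by rewrite leey.
  rewrite lee_fin.
  suff : a + a - s <= b by lra.
  rewrite -lee_fin /b -value_fin; apply/ereal_infP => _ [x hx <-].
  have := H x y hx hy; rewrite E EFinB => h.
  by rewrite leeBlDr.
suff : ((a + a - b)%:E <= c%:E)%E by rewrite lee_fin; lra.
rewrite /c -value_fin; apply/ereal_infP => _ [y hy <-]; exact: H2.
Qed.

Lemma incr_r j n : rv (j + n) - rv j <= rv (j.+1 + n) - rv j.+1.
Proof.
elim: n => [|n IH]; first by rewrite !addn0 !subrr.
have := convex_r (j + n).
rewrite !addnS !addSn => hc.
have e1 : rv (j + n).+1 - rv j = (rv (j + n).+1 - rv (j + n)) + (rv (j + n) - rv j) by ring.
have e2 : rv (j + n).+2 - rv j.+1 = (rv (j + n).+2 - rv (j + n).+1) + (rv (j.+1 + n) - rv j.+1).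
  by rewrite addSn; ring.
rewrite e1 e2; lra.
Qed.

Lemma Gfun_succ k : (Gfun P sigma F k T <= Gfun P sigma F k.+1 T)%E.
Proof.
rewrite /Gfun.
have vf j : value P sigma F j T = (rv j)%:E by rewrite /rv -value_fin.
have [a0 _ ha0] := @eq_bigmin _ _ _ (+oo)%E ord0 xpredT
   (fun a : 'I_k.+1 => value P sigma F (k - a)%N T + (F a%:R)%:E)%E isT (fun _ _ => leey _).
have [b0 _ hb0] := @eq_bigmin _ _ _ (+oo)%E ord0 xpredT
   (fun a : 'I_k.+2 => value P sigma F (k.+1 - a)%N T + (F a%:R)%:E)%E isT (fun _ _ => leey _).
rewrite ha0 hb0.
have a0lt : (a0 < k.+2)%N by apply: ltn_trans (ltn_ord a0) _.
have hmin := bigmin_le (+oo)%E (Ordinal a0lt)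
   (fun a : 'I_k.+2 => value P sigma F (k.+1 - a)%N T + (F a%:R)%:E)%E.
rewrite hb0 in hmin.
move: hmin; rewrite !vf -!EFinD lee_fin => hmin.
rewrite lee_fin.
have a0k : (a0 <= k)%N by rewrite -ltnS.
have := incr_r (k - a0) a0.
rewrite subnK // (_ : ((k - a0).+1 + a0)%N = k.+1); last by lia.
move: hmin; rewrite (_ : (k.+1 - a0)%N = (k - a0).+1); last by lia.
lra.
Qed.

Lemma Gfun_mono k k' : (k <= k')%N -> (Gfun P sigma F k T <= Gfun P sigma F k' T)%E.
Proof.
elim: k' => [|k' IH]; first by rewrite leqn0 => /eqP ->.
rewrite leq_eqVlt => /orP[/eqP ->//|]; rewrite ltnS => /IH h.
exact: le_trans h (Gfun_succ k').
Qed.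

End Basic.

Theorem lemma2p9 (d : measure_display) (Omega : measurableType d)
  (R : realType) (P : probability Omega R) (lam : R) (sigma : nat -> Omega -> R)
  (F : R -> R) :
  0 < lam ->
  poisson_arrivals P lam sigma ->
  F 0 = 0 ->
  (forall x, 0 <= x -> 0 <= F x) ->
  (forall x y, 0 <= x -> x < y -> F x < F y) ->
  (forall x y t, 0 <= x -> 0 <= y -> x != y -> 0 < t < 1 ->
     F (t * x + (1 - t) * y) < t * F x + (1 - t) * F y) ->
  forall T : R, 0 <= T ->
  forall k k' : nat, (k <= k')%N ->
    (Gfun P sigma F k T <= Gfun P sigma F k' T)%E.
Proof.
move=> _ [hs0 hinc hunb [hmi _] _] F0 Fpos _ Fconv T T0 k k' hk.
by apply: Gfun_mono.
Qed.
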